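(* Let $r\ge2$ and let $\tilde{\mathbf L}^{\mathrm{PD}}\in\mathbb R^{|\mathcal G_r|\times r!}$ be the matrix with rows indexed by $G\in\mathcal G_r$, columns indexed by $\sigma\in\Pi_r$, and entries \[ \tilde\ell^{\mathrm{PD}}(G,\sigma)=\sum_{i=1}^r\sum_{j=1}^{i-1}\Big(\mathbf 1\big((i,j)\in G\big)-\mathbf 1\big((j,i)\in G\big)\Big)\cdot\mathbf 1\big(\sigma(i)>\sigma(j)\big). \] Then $\operatorname{rank}(\tilde{\mathbf L}^{\mathrm{PD}})=\frac{r(r-1)}{2}$.
   Context: $\mathcal G_r$ is the set of all directed acyclic graphs on the vertex set $[r]=\{1,\dots,r\}$, viewed as sets of directed edges $(i,j)$; $\Pi_r$ is the set of all permutations (bijections) $\sigma:[r]\to[r]$, where $\sigma(i)$ is the position of element $i$; $\mathbf 1(\cdot)$ is the indicator function. *)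

(* Defs.v *)
From HB Require Import structures.
From mathcomp Require Import all_boot all_order all_algebra all_fingroup.
Set Implicit Arguments. Unset Strict Implicit. Unset Printing Implicit Defensive.
Import Order.TTheory GRing.Theory Num.Theory.

(* Vertex set [r] is represented by 'I_r = {0,...,r-1}. *)
Definition acyclicb (r : nat) (E : {set 'I_r * 'I_r}) : bool :=
  [forall x : 'I_r, forall y : 'I_r,
     ((x, y) \in E) ==> ~~ connect (fun a b => (a, b) \in E) y x].

Definition dag (r : nat) := {E : {set 'I_r * 'I_r} | acyclicb E}.

(* entry  l~PD(G, sigma) ; sigma i = position of element i *)
Definition lPD (R : numDomainType) (r : nat) (G : dag r) (s : {perm 'I_r}) : R :=
  \sum_(i < r) \sum_(j < r | (j < i)%N)
     ((((i, j) \in val G)%:R - ((j, i) \in val G)%:R) * ((s j < s i)%N)%:R).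

Definition LPD (R : numDomainType) (r : nat) : 'M[R]_(#|{: dag r}|, #|{: {perm 'I_r}}|) :=
  \matrix_(g < #|{: dag r}|, p < #|{: {perm 'I_r}}|) lPD R (enum_val g) (enum_val p).

(* Main.v *)
Require Import Defs.
From HB Require Import structures.
From mathcomp Require Import all_boot all_order all_algebra all_fingroup.
From mathcomp Require Import zify ring.
Import Order.TTheory GRing.Theory Num.Theory.
Set Implicit Arguments. Unset Strict Implicit. Unset Printing Implicit Defensive.

Section Perms.
Variable r : nat.

Definition key (f : 'I_r -> bool) (i : 'I_r) : nat := f i * r + i.

Lemma key_inj f : injective (key f).
Proof.
move=> i j; rewrite /key => h; apply: val_inj => /=.
have hi := ltn_ord i; have hj := ltn_ord j.
move: h; case: (f i); case: (f j) => /=; lia.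
Qed.

Definition rk f (i : 'I_r) : nat := #|[set j | key f j < key f i]|.

Lemma rk_lt f i : rk f i < r.
Proof.
rewrite /rk; apply: (@leq_trans #|[set: 'I_r]|); last by rewrite cardsT card_ord.
apply: proper_card; apply/properP; split.
  by apply/subsetP.
by exists i; rewrite ?inE ?ltnn.
Qed.

Lemma rk_mono f i j : key f i < key f j -> rk f i < rk f j.
Proof.
move=> h; apply: proper_card; apply/properP; split.
  apply/subsetP => x; rewrite !inE => hx; exact: ltn_trans hx h.
by exists i; rewrite !inE ?ltnn.
Qed.

Lemma rk_ltE f i j : (rk f i < rk f j) = (key f i < key f j).
Proof.
case: (ltngtP (key f i) (key f j)) => h.
- exact: rk_mono.
- by apply/negbTE; rewrite -leqNgt ltnW // rk_mono.
- by rewrite (key_inj h) ltnn.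
Qed.

Lemma rk_inj f : injective (fun i => Ordinal (rk_lt f i)).
Proof.
move=> i j /(congr1 val) /= h; apply: (@key_inj f).
case: (ltngtP (key f i) (key f j)) => // hk.
- by move: (rk_mono hk); rewrite h ltnn.
- by move: (rk_mono hk); rewrite h ltnn.
Qed.

Definition sg f : {perm 'I_r} := perm (@rk_inj f).

Lemma sgE f i j : (sg f i < sg f j)%N = (key f i < key f j).
Proof. by rewrite !permE /= rk_ltE. Qed.

Lemma keylt f (i j : 'I_r) : (j < i)%N -> (key f j < key f i) = ~~ (f j && ~~ f i).
Proof.
rewrite /key => h; have hi := ltn_ord i; have hj := ltn_ord j.
case: (f i); case: (f j) => /=; lia.
Qed.

End Perms.
Section Main.
Variables (R : realFieldType) (r : nat).
Local Open Scope ring_scope.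

Definition P : {set 'I_r * 'I_r} := [set p : 'I_r * 'I_r | (p.2 < p.1)%N].
Definition xv (p : 'I_r * 'I_r) (s : {perm 'I_r}) : R := ((s p.2 < s p.1)%N)%:R.
Definition cv (G : dag r) (p : 'I_r * 'I_r) : R :=
  (p \in val G)%:R - ((p.2, p.1) \in val G)%:R.
Definition Xm : 'M[R]_(#|P|, #|{: {perm 'I_r}}|) :=
  \matrix_(k, q) xv (enum_val k) (enum_val q).
Definition Cm : 'M[R]_(#|{: dag r}|, #|P|) :=
  \matrix_(g, k) cv (enum_val g) (enum_val k).

Lemma LPD_factor : LPD R r = Cm *m Xm.
Proof.
apply/matrixP => g q; rewrite !mxE.
under [RHS]eq_bigr => k _ do rewrite !mxE.
rewrite -(@big_enum_val _ _ _ _ (mem P) (fun p => cv (enum_val g) p * xv p (enum_val q))).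
rewrite /lPD pair_big_dep /=.
by apply: eq_big => [[i j]|[i j] _] /=; rewrite ?inE.
Qed.

Lemma acyc_down (E : {set 'I_r * 'I_r}) :
  (forall e, e \in E -> (e.2 < e.1)%N) -> acyclicb E.
Proof.
move=> hE; apply/forallP => x; apply/forallP => y; apply/implyP => hxy.
have lt := hE _ hxy; move: lt => /= lt.
apply/negP => /connectP [s pth xE]; move: lt; rewrite xE {xE}; clear hxy.
elim: s y pth => [|z s IH] y /=; first by rewrite ltnn.
move=> /andP [eyz pth] hl; have /= hzy := hE _ eyz.
by apply: (IH z pth); apply: ltn_trans hl.
Qed.

Lemma sdag_ok (p : 'I_r * 'I_r) :
  acyclicb [set e | (e == p) && (p.2 < p.1)%N].
Proof. by apply: acyc_down => e; rewrite inE => /andP [/eqP ->]. Qed.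

Definition sdag (p : 'I_r * 'I_r) : dag r := exist (fun E => acyclicb E) _ (sdag_ok p).

Lemma cv_sdag k p : k \in P -> p \in P -> cv (sdag k) p = (p == k)%:R.
Proof.
rewrite !inE /cv /= !inE => hk hp; rewrite hk !andbT.
have -> : ((p.2, p.1) == k) = false.
  apply/negP => /eqP hE; move: hk; rewrite -hE /= => hk.
  by move: (ltn_trans hk hp); rewrite ltnn.
by rewrite subr0.
Qed.

Definition Sm : 'M[R]_(#|P|, #|{: dag r}|) :=
  \matrix_(k, g) (g == enum_rank (sdag (enum_val k)))%:R.

Lemma SC1 : Sm *m Cm = 1%:M.
Proof.
apply/matrixP => k k'; rewrite !mxE.
rewrite (bigD1 (enum_rank (sdag (enum_val k)))) //= big1; last first.
  by move=> g /negbTE hg; rewrite !mxE hg mul0r.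
rewrite !mxE eqxx mul1r addr0 enum_rankK cv_sdag ?enum_valP //.
by rewrite (inj_eq enum_val_inj) eq_sym.
Qed.

End Main.
Section Main2.
Variables (R : realFieldType) (r : nat).
Local Open Scope ring_scope.

Definition f0 : 'I_r -> bool := fun _ => false.
Definition fa (a : 'I_r) : 'I_r -> bool := fun x => x == a.
Definition fab (a b : 'I_r) : 'I_r -> bool := fun x => (x == a) || (x == b).

Lemma comb p k : p \in P r -> k \in P r ->
  xv R p (sg f0) - xv R p (sg (fa k.1)) - xv R p (sg (fa k.2))
  + xv R p (sg (fab k.1 k.2)) = (p == k)%:R.
Proof.
case: p => i j; case: k => a b; rewrite !inE /= => hp hk.
have hab : (a == b) = false by apply/negbTE; rewrite neq_ltn hk orbT.
have hba : (b == a) = false by rewrite eq_sym.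
rewrite /xv /= !sgE !keylt // /f0 /fa /fab /= xpair_eqE.
case: (eqVneq j a) => [?|hja]; case: (eqVneq j b) => [?|hjb];
case: (eqVneq i a) => [?|hia]; case: (eqVneq i b) => [?|hib]; subst => /=.
all: try (exfalso; lia).
all: ring.
Qed.
End Main2.
Section Main3.
Variables (R : realFieldType) (r : nat).
Local Open Scope ring_scope.

Definition dl (t s : {perm 'I_r}) : R := (s == t)%:R.

Definition Ym : 'M[R]_(#|{: {perm 'I_r}}|, #|P r|) :=
  \matrix_(q, k) (dl (sg (@f0 r)) (enum_val q) - dl (sg (fa (enum_val k).1)) (enum_val q)
     - dl (sg (fa (enum_val k).2)) (enum_val q)
     + dl (sg (fab (enum_val k).1 (enum_val k).2)) (enum_val q)).

Lemma sum_delta p t :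
  \sum_(q < #|{: {perm 'I_r}}|) xv R p (enum_val q) * dl t (enum_val q) = xv R p t.
Proof.
rewrite -(@big_enum_val _ _ _ _ (mem {: {perm 'I_r}}) (fun s => xv R p s * dl t s)).
rewrite (bigD1 t) //= big1; first by rewrite /dl eqxx mulr1 addr0.
by move=> s; rewrite /dl ?inE ?andTb => /negbTE ->; rewrite mulr0.
Qed.

Lemma XY1 : Xm R r *m Ym = 1%:M.
Proof.
apply/matrixP => k' k; rewrite !mxE.
under eq_bigr => q _ do rewrite !mxE mulrDr !mulrBr.
rewrite big_split /= !sumrB !sum_delta comb ?enum_valP //.
by rewrite (inj_eq enum_val_inj).
Qed.

End Main3.

Lemma cardP (r : nat) : #|P r| = (r * (r - 1)) %/ 2.
Proof.
rewrite -sum1_card.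
have -> : \sum_(p in P r) 1 = \sum_(i < r) \sum_(j < r | (j < i)%N) 1.
  rewrite pair_big_dep; apply: eq_bigl => -[i j]; by rewrite inE.
have -> : \sum_(i < r) \sum_(j < r | (j < i)%N) 1 = \sum_(i < r) (i : nat).
  apply: eq_bigr => i _.
  rewrite -(big_ord_widen_cond r (fun _ => true) (fun _ => 1)) ?(ltnW (ltn_ord i)) //.
  by rewrite sum1_card card_ord.
by rewrite -(big_mkord xpredT (fun i => i)) bin2_sum bin2 divn2 subn1.
Qed.


Theorem mainTheorem16 (R : realFieldType) (r : nat) (hr : (2 <= r)%N) :
  \rank (LPD R r) = (r * (r - 1)) %/ 2.
Proof.
rewrite -cardP; apply/eqP; rewrite eqn_leq; apply/andP; split.
  by rewrite LPD_factor mulmx_max_rank.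
apply: (@mulmx1_min_rank _ _ _ _ _ (Sm R r) (Ym R r)).
by rewrite LPD_factor mulmxA SC1 mul1mx XY1.
Qed.
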